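(* Consider the distributed quantized weight-balancing algorithm described in the context on a strongly connected digraph, with step-size $\gamma(k)=2^{-n}$ for $2^n-1\le k\le 2^{n+1}-2$. Let $\mathcal{V}^+(k)=\{i\in\mathcal{V}:b_i(k)\ge0\}$ and $\mathcal{V}^{--}(k)=\{i\in\mathcal{V}:b_i(k)<0\}$. If the decreasing event $\mathcal{D}_k$ does not occur, then $\mathcal{V}^+(k+1)=\mathcal{V}^+(k)$ and $\mathcal{V}^{--}(k+1)=\mathcal{V}^{--}(k)$.
   Context: $\mathcal{G}=(\mathcal{V},\mathcal{E})$, $\mathcal{V}=\{1,\dots,N\}$, no self-loops; $\mathcal{N}_i^-=\{j:(j,i)\in\mathcal{E}\}$, $\mathcal{N}_i^+=\{j:(i,j)\in\mathcal{E}\}$, $d_i^+=|\mathcal{N}_i^+|$. Algorithm: $a_{ij}(0)=1$ if $j\in\mathcal{N}_i^-$ and $0$ otherwise; $b_i(k)=\sum_{j\in\mathcal{N}_i^-}a_{ij}(k)-\sum_{j\in\mathcal{N}_i^+}a_{ji}(k)$; $n_i(k)=1$ if $b_i(k)\ge d_i^+\gamma(k)$, else $0$; $a_{ij}(k+1)=a_{ij}(k)+n_j(k)\gamma(k)$ for $j\in\mathcal{N}_i^-$. The decreasing event $\mathcal{D}_k$: there exist $i\in\mathcal{V}$ and $j\in\mathcal{N}_i^+$ with $n_i(k)>0$ and $b_j(k)<0$. *)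

(* Defs.v *)
From HB Require Import structures.
From mathcomp Require Import all_boot all_order all_algebra.
Set Implicit Arguments. Unset Strict Implicit. Unset Printing Implicit Defensive.
Import Order.TTheory GRing.Theory Num.Theory.
Local Open Scope ring_scope.

Section QWB.
Variables (R : realFieldType) (N : nat).
(* E j i = true  iff  (j,i) is an edge of the digraph on V = 'I_N *)
Variable E : rel 'I_N.

(* step size: gamma(k) = 2^{-n} for 2^n - 1 <= k <= 2^{n+1} - 2,
   i.e. n = floor(log2 (k+1)) *)
Definition gamma (k : nat) : R := ((2 ^ trunc_log 2 k.+1)%N%:R)^-1.

Definition outdeg (i : 'I_N) : nat := #|[set j | E i j]|.

Definition imbalance (a : 'I_N -> 'I_N -> R) (i : 'I_N) : R :=
  \sum_(j | E j i) a i j - \sum_(j | E i j) a j i.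

Definition nflag (a : 'I_N -> 'I_N -> R) (g : R) (i : 'I_N) : R :=
  if (outdeg i)%:R * g <= imbalance a i then 1 else 0.

Fixpoint weights (k : nat) : 'I_N -> 'I_N -> R :=
  match k with
  | 0%N => fun i j => if E j i then 1 else 0
  | k'.+1 => let a := weights k' in
             fun i j => if E j i then a i j + nflag a (gamma k') j * gamma k'
                        else a i j
  end.

Definition b (k : nat) (i : 'I_N) : R := imbalance (weights k) i.
Definition n (k : nat) (i : 'I_N) : R := nflag (weights k) (gamma k) i.

Definition decreasing_event (k : nat) : Prop :=
  exists i j, E i j /\ 0 < n k i /\ b k j < 0.

Definition Vplus (k : nat) : {set 'I_N} := [set i | 0 <= b k i].
Definition Vminus (k : nat) : {set 'I_N} := [set i | b k i < 0].
End QWB.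

Definition no_self_loops (N : nat) (E : rel 'I_N) := forall i, ~~ E i i.
Definition strongly_connected (N : nat) (E : rel 'I_N) :=
  forall i j, connect E i j.

(* Main.v *)
Require Import Defs.
From HB Require Import structures.
From mathcomp Require Import all_boot all_order all_algebra.
Import Order.TTheory GRing.Theory Num.Theory.
Local Open Scope ring_scope.

Lemma bS (R : realFieldType) (N : nat) (E : rel 'I_N) k i :
  b R E k.+1 i = b R E k i + (\sum_(j | E j i) n R E k j * gamma R k)
     - (outdeg E i)%:R * (n R E k i * gamma R k).
Proof.
rewrite /b /imbalance /=.
under eq_bigr => j hj do rewrite hj.
under [X in _ - X = _]eq_bigr => j hj do rewrite hj.
rewrite !big_split /= -/(n R E k _).
have -> : \sum_(i0 | E i i0) n R E k i * gamma R k
   = (outdeg E i)%:R * (n R E k i * gamma R k).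
  rewrite sumr_const /outdeg mulr_natl; congr (_ *+ _).
  by apply: eq_card => j; rewrite !inE.
rewrite opprD !addrA; congr (_ - _); rewrite -!addrA; congr (_ + _).
by rewrite addrC.
Qed.

Theorem lemma2 (R : realFieldType) (N : nat) (E : rel 'I_N)
  (hloop : no_self_loops E) (hsc : strongly_connected E) (k : nat) :
  ~ decreasing_event R E k ->
  Vplus R E k.+1 = Vplus R E k /\ Vminus R E k.+1 = Vminus R E k.
Proof.
move=> hD.
have g0 : 0 <= gamma R k by rewrite /gamma invr_ge0 ler0n.
have n01 : forall j, n R E k j = 0 \/ n R E k j = 1.
  by move=> j; rewrite /n /nflag; case: ifP; [right|left].
have nge0 : forall j, 0 <= n R E k j by move=> j; case: (n01 j) => ->.
have key : forall i, (0 <= b R E k.+1 i) = (0 <= b R E k i).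
  move=> i; rewrite bS.
  have S0 : 0 <= \sum_(j | E j i) n R E k j * gamma R k.
    by apply: sumr_ge0 => j _; apply: mulr_ge0.
  case: (ltrP (b R E k i) 0) => hb.
  - have nz : forall j, E j i -> n R E k j = 0.
      move=> j hj; case: (n01 j) => // h1; exfalso; apply: hD.
      by exists j, i; rewrite h1 ltr01.
    have ni : n R E k i = 0.
      move: hb; rewrite /n /nflag /b; case: ifP => // h hb; exfalso.
      have : 0 <= (outdeg E i)%:R * gamma R k by apply: mulr_ge0.
      move=> h0; have := le_trans h0 h; rewrite leNgt hb //.
    rewrite big1 ?ni; last by move=> j hj; rewrite nz ?mul0r.
    by rewrite mul0r mulr0 addr0 subr0; apply/negbTE; rewrite -ltNge.
  - apply/idP; case: (n01 i) => hn.
      by rewrite hn mul0r mulr0 subr0 addr_ge0.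
    rewrite hn mul1r.
    move: hn; rewrite /n /nflag; case: ifP => h; last first.
      by move=> /eqP; rewrite eq_sym oner_eq0.
    by move=> _; rewrite addrAC; apply: addr_ge0 => //; rewrite subr_ge0.
split; apply/setP => i; rewrite !inE ?key //.
by rewrite !ltNge key.
Qed.
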